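(* Let $G$ be a finite connected interval graph that is balanced and $p$-critical (for some $p\ge1$), and let $z$ be the basepoint of $G$. (a) If there is at most one exterior local component at $z$, then there are at least two local components at $z$ which are cliques and have maximum order among the local components at $z$. (b) If there is no exterior local component at $z$, then there are at least three local components at $z$ which are cliques and have maximum order among the local components at $z$.
   Context: An interval graph is a finite simple graph whose vertices can be assigned (closed, bounded) real intervals $I_v$ so that $v,w$ are adjacent iff $I_v\cap I_w\ne\emptyset$. For such a representation $\alpha$, $\mathrm{imp}_\alpha(z)$ is the number of intervals $I_w$, $w\ne z$, with $I_w\subseteq I_z$; $\mathrm{imp}(\alpha)=\max_z\mathrm{imp}_\alpha(z)$; and the impropriety $\mathrm{imp}(G)$ is the minimum of $\mathrm{imp}(\alpha)$ over all representations. A local component at $z$ is a connected component of $G\setminus\{z\}$; it is exterior iff it contains a vertex not adjacent to $z$. If $z$ has $n$ local components, $\mathrm{wt}(z)$ is the sum of the $n-2$ smallest orders among the non-exterior local components at $z$ ($0$ if $n\le2$), and $\mathrm{wt}(G)=\max_z \mathrm{wt}(z)$. $G$ is balanced iff $\mathrm{wt}(G)=\mathrm{imp}(G)$. If $G$ is balanced, a basepoint of $G$ is a vertex $z$ with $\mathrm{wt}(z)=\mathrm{imp}(G)$ (a balanced $p$-critical graph has exactly one basepoint). For $p>0$, $G$ is $p$-critical iff $\mathrm{imp}(G)=p$ and every proper induced subgraph of $G$ has impropriety strictly less than $p$. *)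

(* Defs.v *)
From Stdlib Require Import Reals.
From mathcomp Require Import all_boot.
Set Implicit Arguments. Unset Strict Implicit. Unset Printing Implicit Defensive.

(* A finite simple graph: vertex type T : finType, symmetric irreflexive
   adjacency e.  Induced subgraphs are given by vertex sets V : {set T}. *)
Definition simple_graph (T : finType) (e : rel T) : Prop :=
  symmetric e /\ irreflexive e.

Definition Rleb (a b : R) : bool := if Rle_dec a b then true else false.

Section Graphs.
Variables (T : finType) (e : rel T).

Definition induced (V : {set T}) : rel T :=
  [rel x y | [&& x \in V, y \in V & e x y]].

Definition connected_set (V : {set T}) : Prop :=
  forall x y, x \in V -> y \in V -> connect (induced V) x y.

Definition is_rep (V : {set T}) (l r : T -> R) : Prop :=
  (forall v, v \in V -> Rle (l v) (r v)) /\
  (forall v w, v \in V -> w \in V -> v != w ->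
     (e v w <-> Rle (l v) (r w) /\ Rle (l w) (r v))).

Definition subint (l r : T -> R) (w z : T) : bool :=
  Rleb (l z) (l w) && Rleb (r w) (r z).

Definition imp_at (V : {set T}) (l r : T -> R) (z : T) : nat :=
  #|[set w in V | (w != z) && subint l r w z]|.

Definition imp_rep (V : {set T}) (l r : T -> R) : nat :=
  \max_(z in V) imp_at V l r z.

Definition interval_graph (V : {set T}) : Prop := exists l r, is_rep V l r.

Definition imp_eq (V : {set T}) (k : nat) : Prop :=
  (exists l r, is_rep V l r /\ imp_rep V l r = k) /\
  (forall l r, is_rep V l r -> k <= imp_rep V l r).

Definition p_critical (V : {set T}) (p : nat) : Prop :=
  0 < p /\ imp_eq V p /\
  (forall S : {set T}, S \proper V -> exists k, k < p /\ imp_eq S k).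

Definition comp (S : {set T}) (x : T) : {set T} :=
  [set y | connect (induced S) x y].

Definition local_comps (V : {set T}) (z : T) : {set {set T}} :=
  [set comp (V :\ z) x | x in V :\ z].

Definition exterior (z : T) (C : {set T}) : bool :=
  [exists w in C, ~~ e z w].

Definition is_clique (C : {set T}) : bool :=
  [forall x in C, forall y in C, (x != y) ==> e x y].

Definition wt (V : {set T}) (z : T) : nat :=
  let n := #|local_comps V z| in
  let orders := sort leq [seq #|C| | C : {set T} <- enum [set C in local_comps V z
                                                | ~~ exterior z C]] in
  sumn (take (n - 2) orders).

Definition wtG (V : {set T}) : nat := \max_(z in V) wt V z.

Definition balanced (V : {set T}) : Prop := imp_eq V (wtG V).

Definition basepoint (V : {set T}) (z : T) : Prop :=
  balanced V /\ z \in V /\ imp_eq V (wt V z).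

Definition max_order_comps (V : {set T}) (z : T) : nat :=
  \max_(C in local_comps V z) #|C|.

Definition max_clique_comps (V : {set T}) (z : T) : {set {set T}} :=
  [set C in local_comps V z | is_clique C && (#|C| == max_order_comps V z)].

Definition exterior_comps (V : {set T}) (z : T) : {set {set T}} :=
  [set C in local_comps V z | exterior z C].

End Graphs.

(* Main.v *)
Require Import Defs.
From Stdlib Require Import Reals Lra.
From mathcomp Require Import all_boot zify.
Set Implicit Arguments. Unset Strict Implicit. Unset Printing Implicit Defensive.


Fixpoint ins (x : nat) (a : seq nat) : seq nat :=
  if a is y :: a' then (if x <= y then x :: a else y :: ins x a') else [:: x].

Lemma path_ins x a y : path leq y a -> y <= x -> path leq y (ins x a).
Proof.
elim: a y => [|w a IH] y /=; first by move=> _ ->.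
case/andP=> yw pa yx; case: ifP => xw /=; first by rewrite yx xw.
rewrite yw IH //; by rewrite ltnW // ltnNge xw.
Qed.

Lemma sorted_ins x a : sorted leq a -> sorted leq (ins x a).
Proof.
case: a => [|y a] //= pa; case: ifP => xy /=; first by rewrite xy.
by apply: path_ins => //; rewrite ltnW // ltnNge xy.
Qed.

Lemma perm_ins x a : perm_eq (ins x a) (x :: a).
Proof.
elim: a => [|y a IH] //=; case: ifP => _ //.
apply: (@perm_trans _ (y :: x :: a)); first by rewrite perm_cons.
by rewrite (perm_catCA [:: y] [:: x] a).
Qed.

Lemma sort_cons x s : sort leq (x :: s) = ins x (sort leq s).
Proof.
apply: (sorted_eq leq_trans anti_leq).
- exact: sort_sorted leq_total _.
- apply: sorted_ins; exact: sort_sorted leq_total _.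
rewrite perm_sort; apply: (@perm_trans _ (x :: sort leq s)).
  by rewrite perm_cons perm_sym perm_sort.
by rewrite perm_sym perm_ins.
Qed.

Lemma sum_take_cons a x m : sorted leq (x :: a) -> m <= size a ->
  sumn (take m (x :: a)) <= sumn (take m a).
Proof.
elim: a x m => [|w a IH] x [|m] //= /andP[xw pa] Hm.
rewrite leq_add //; exact: IH.
Qed.

Lemma sum_take_ins x a m : sorted leq a -> m <= size a ->
  sumn (take m (ins x a)) <= sumn (take m a).
Proof.
elim: a m => [|y a IH] m /=; first by case: m.
move=> pa; case: ifP => xy Hm.
  by apply: sum_take_cons => //=; rewrite xy.
case: m Hm => [|m] //= Hm; rewrite leq_add2l; apply: IH => //.
exact: path_sorted pa.
Qed.

Lemma sum_take_le s m : sumn (take m s) <= sumn s.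
Proof. by rewrite -{2}(cat_take_drop m s) sumn_cat leq_addr. Qed.

Lemma sum_take_sort_cat t u m : m <= size t ->
  sumn (take m (sort leq (t ++ u))) <= sumn t.
Proof.
move=> Hm; elim: u => [|x u IH].
  rewrite cats0; apply: leq_trans (sum_take_le _ _) _.
  by rewrite (perm_sumn (_ : perm_eq (sort leq t) t)) // perm_sort.
have -> : sort leq (t ++ x :: u) = sort leq (x :: (t ++ u)).
  apply/(perm_sortP leq_total leq_trans anti_leq).
  by rewrite -cat1s perm_catCA.
rewrite sort_cons; apply: leq_trans IH.
apply: sum_take_ins; first exact: sort_sorted leq_total _.
by rewrite size_sort size_cat (leq_trans Hm) ?leq_addr.
Qed.


Lemma connect_prop (T : finType) (r : rel T) (P : pred T) x y :
  (forall a b, P a -> r a b -> P b) -> connect r x y -> P x -> P y.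
Proof.
move=> H /connectP [q pq ->]; elim: q x pq => //= w q IH x /andP[rxw pq] Px.
exact: IH pq (H _ _ Px rxw).
Qed.

Section G.
Variables (T : finType) (e : rel T).
Hypothesis Hsym : symmetric e.
Hypothesis eirr : irreflexive e.

Lemma inducedE (S : {set T}) a b : induced e S a b = [&& a \in S, b \in S & e a b].
Proof. by []. Qed.

Lemma induced_sym (S : {set T}) : symmetric (induced e S).
Proof. by move=> x y; rewrite /induced /= Hsym; case: (x \in S); case: (y \in S). Qed.

Lemma iconn_sym (S : {set T}) x y : connect (induced e S) x y = connect (induced e S) y x.
Proof. by rewrite (sym_connect_sym (induced_sym S)). Qed.

Lemma comp_sub (S : {set T}) x : x \in S -> Defs.comp e S x \subset S.
Proof.
move=> xS; apply/subsetP=> y; rewrite inE => cxy.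
apply: (connect_prop (P := fun w => w \in S)) cxy xS => a b _ /= /and3P[].
by [].
Qed.

Lemma comp_self (S : {set T}) x : x \in Defs.comp e S x.
Proof. by rewrite inE connect0. Qed.

Lemma comp_eq (S : {set T}) x y : y \in Defs.comp e S x -> Defs.comp e S y = Defs.comp e S x.
Proof.
rewrite inE => cxy; apply/setP=> w; rewrite !inE; apply/idP/idP => H.
  exact: connect_trans cxy H.
by rewrite iconn_sym in cxy; exact: connect_trans cxy H.
Qed.

Lemma comps_partition (V : {set T}) z : partition (local_comps e V z) (V :\ z).
Proof.
have -> : local_comps e V z = equivalence_partition (connect (induced e (V :\ z))) (V :\ z).
  rewrite /local_comps /equivalence_partition; apply: eq_in_imset => x xS.
  apply/setP=> y; rewrite !inE; apply/idP/idP => [H|/andP[] //].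
  have yS : y \in V :\ z by move/subsetP: (comp_sub xS); apply; rewrite inE.
  by rewrite H andbT; move: yS; rewrite !inE.
apply: equivalence_partitionP => x y w _ _ _; split; first exact: connect0.
move=> cxy; apply/idP/idP => H.
  by rewrite iconn_sym in cxy; exact: connect_trans cxy H.
exact: connect_trans cxy H.
Qed.

Lemma card_comps (V : {set T}) z : #|V :\ z| = \sum_(C in local_comps e V z) #|C|.
Proof. exact: card_partition (comps_partition V z). Qed.

Lemma comps_sub (V : {set T}) z C : C \in local_comps e V z -> C \subset V :\ z.
Proof. by case/imsetP => x xS ->; exact: comp_sub. Qed.

Lemma comps_of (V : {set T}) z x : x \in V :\ z -> Defs.comp e (V :\ z) x \in local_comps e V z.
Proof. by move=> xS; apply: imset_f. Qed.

Lemma comps_mem_eq (V : {set T}) z C x : C \in local_comps e V z -> x \in C ->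
  C = Defs.comp e (V :\ z) x.
Proof. by case/imsetP => y yS -> xC; rewrite (comp_eq xC). Qed.

Lemma comps_sep (V : {set T}) z C1 C2 x y : C1 \in local_comps e V z -> C2 \in local_comps e V z ->
  C1 != C2 -> x \in C1 -> y \in C2 -> (x != y) && ~~ e x y.
Proof.
move=> C1c C2c ne xC yC; rewrite (comps_mem_eq C1c xC) (comps_mem_eq C2c yC) in ne.
apply/andP; split; first by apply: contraNneq ne => ->.
apply: contraNN ne => exy; apply/eqP; symmetry; apply: comp_eq.
have := comps_sub C1c => /subsetP /(_ x xC) xS.
have := comps_sub C2c => /subsetP /(_ y yC) yS.
by rewrite inE; apply: connect1; rewrite inducedE xS yS exy.
Qed.

Lemma comps_conn (V : {set T}) z C : C \in local_comps e V z ->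
  forall x y, x \in C -> y \in C -> connect (induced e C) x y.
Proof.
move=> Cc x y xC yC; have EC := comps_mem_eq Cc xC.
have : y \in Defs.comp e (V :\ z) x by rewrite -EC.
rewrite inE => cxy.
have := connect_prop (P := fun w => (w \in C) && connect (induced e C) x w) _ cxy.
rewrite xC connect0 => /(_ _ isT) /andP[] //.
move=> a b /andP[aC cxa] iab; have bC : b \in C.
  rewrite EC inE; apply: connect_trans (connect1 iab).
  by have := aC; rewrite EC inE.
rewrite bC; apply: connect_trans cxa (connect1 _).
by case/and3P: iab => _ _ eab; rewrite inducedE aC bC.
Qed.

Lemma comps_nbr z (C : {set T}) : connected_set e [set: T] -> C \in local_comps e [set: T] z ->
  exists2 y, y \in C & e z y.
Proof.
move=> Gc Cc; case/imsetP: (Cc) => x0 x0S EC.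
case: (boolP [exists y in C, e z y]) => [/existsP[y /andP[]]|H]; first by exists y.
exfalso; have zC : z \in C.
  have Hc := Gc x0 z (in_setT x0) (in_setT z).
  have x0C : x0 \in C by rewrite EC comp_self.
  apply: (connect_prop (P := fun w => w \in C)) Hc x0C.
  move=> a b aC /and3P[_ _ eab].
  have bz : b != z.
    apply: contraNneq H => bz; apply/existsP; exists a; by rewrite aC Hsym -bz.
  have aS : a \in [set: T] :\ z by move: (comps_sub Cc) => /subsetP; apply.
  have bS : b \in [set: T] :\ z by rewrite !inE bz.
  rewrite (comps_mem_eq Cc aC) inE; apply: connect1; by rewrite inducedE aS bS eab.
by move: (comps_sub Cc) => /subsetP /(_ z zC); rewrite !inE eqxx.
Qed.

Lemma clique1 (C : {set T}) : #|C| <= 1 -> is_clique e C.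
Proof.
move/card_le1P => H; apply/forallP => x; apply/implyP => xC; apply/forallP => y.
apply/implyP => yC; have := H x xC y; rewrite yC inE => /esym/eqP ->.
by rewrite eqxx.
Qed.

Lemma clique2 (C : {set T}) : (forall x y, x \in C -> y \in C -> connect (induced e C) x y) ->
  #|C| = 2 -> is_clique e C.
Proof.
move=> Cc C2; apply/forallP => x; apply/implyP => xC; apply/forallP => y.
apply/implyP => yC; apply/implyP => nxy.
have EC : C = [set x; y].
  apply/eqP; rewrite eq_sym eqEcard cards2 nxy C2 leqnn andbT.
  by apply/subsetP => w; rewrite !inE => /orP[] /eqP ->.
apply/negPn/negP => nexy; have H := Cc x y xC yC.
have : y == x.
  apply: (connect_prop (P := fun w => w == x)) H (eqxx x).
  move=> a b /eqP -> /and3P[_ bC exb]; move: bC; rewrite EC !inE => /orP[] // /eqP yb.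
  by move: exb; rewrite yb (negbTE nexy).
by rewrite eq_sym (negbTE nxy).
Qed.

Lemma noncut (D : {set T}) y0 :
  (forall x y, x \in D -> y \in D -> connect (induced e D) x y) -> y0 \in D ->
  1 < #|D| -> exists2 v, v \in D :\ y0 &
    (forall x y, x \in D :\ v -> y \in D :\ v -> connect (induced e (D :\ v)) x y).
Proof.
move=> Dc y0D D2.
have ne : 0 < #|D :\ y0| by move: D2; rewrite (cardsD1 y0 D) y0D.
have [v vD Emax] := eq_bigmax_cond (fun v => #|Defs.comp e (D :\ v) y0|) ne.
exists v => //.
have y0v : y0 \in D :\ v by move: vD; rewrite !inE y0D andbT eq_sym => /andP[].
suff H : forall x, x \in D :\ v -> connect (induced e (D :\ v)) y0 x.
  move=> x y xD yD; apply: connect_trans (H y yD); by rewrite iconn_sym H.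
move=> x xDv; apply/negPn/negP => nc.
set Z := Defs.comp e (D :\ v) y0.
have ZDv : Z \subset D :\ v by exact: comp_sub.
have xZ : x \notin Z by rewrite inE.
have [zz zzZ ezv] : exists2 zz, zz \in Z & e zz v.
  case: (boolP [exists zz in Z, e zz v]) => [/existsP[zz /andP[]]|H]; first by exists zz.
  exfalso; move: xZ; apply/negP/negPn.
  have xD : x \in D by move: xDv; rewrite inE => /andP[].
  apply: (connect_prop (P := fun w => w \in Z)) (Dc y0 x _ xD) _ ; last first.
    exact: comp_self.
    by move: y0v; rewrite inE => /andP[].
  move=> a b aZ /and3P[_ bD eab].
  have bv : b != v.
    apply: contraNneq H => bv; apply/existsP; exists a; by rewrite aZ -bv.
  have aDv : a \in D :\ v by move/subsetP: ZDv; apply.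
  rewrite /Z inE; apply: connect_trans (connect1 (_ : induced e (D :\ v) a b)).
    by have := aZ; rewrite inE.
  by rewrite inducedE aDv !inE bv bD eab.
have xDy0 : x \in D :\ y0.
  rewrite !inE; move: (xDv); rewrite !inE => /andP[_ ->]; rewrite andbT.
  by apply: contraNneq nc => ->; exact: connect0.
have Hle : #|Defs.comp e (D :\ x) y0| <= \max_(i in D :\ y0) #|Defs.comp e (D :\ i) y0|.
  exact: (leq_bigmax_cond _ xDy0).
rewrite Emax in Hle.
have ZX : Z \subset Defs.comp e (D :\ x) y0.
  apply/subsetP => w; rewrite inE => cw.
  suff /andP[_ H] : connect (induced e (D :\ v)) y0 w && connect (induced e (D :\ x)) y0 w.
    by rewrite inE.
  apply: (connect_prop (P := fun u => connect (induced e (D :\ v)) y0 u &&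
                         connect (induced e (D :\ x)) y0 u)) cw _; last by rewrite !connect0.
  move=> a b /andP[ca cxa] iab; have cb := connect_trans ca (connect1 iab).
  rewrite cb /=; apply: connect_trans cxa (connect1 _).
  have ax : a != x by apply: contraNneq xZ => <-; rewrite inE.
  have bx : b != x by apply: contraNneq xZ => <-; rewrite inE.
  case/and3P: iab; rewrite !inE => /andP[_ aD] /andP[_ bD] eab.
  by rewrite inducedE !inE ax aD bx bD eab.
have vX : v \in Defs.comp e (D :\ x) y0.
  have := subsetP ZX zz zzZ; rewrite !inE => czz.
  apply: connect_trans czz (connect1 _).
  have zzD : zz \in D :\ v by move/subsetP: ZDv; apply.
  have zzx : zz != x by apply: contraNneq xZ => <-.
  have vx : v != x by move: xDv; rewrite !inE eq_sym => /andP[].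
  move: zzD vD; rewrite inducedE !inE => /andP[_ ->] /andP[_ ->]; by rewrite zzx vx ezv.
have vZ : v \notin Z by apply/negP => /(subsetP ZDv); rewrite !inE eqxx.
have : #|v |: Z| <= #|Defs.comp e (D :\ x) y0|.
  by apply: subset_leq_card; rewrite subUset sub1set vX ZX.
by rewrite cardsU1 vZ add1n => /leq_trans /(_ Hle); rewrite ltnn.
Qed.

End G.


Lemma RlebP a b : reflect (Rle a b) (Rleb a b).
Proof. by rewrite /Rleb; case: Rle_dec => H; constructor. Qed.

Lemma Rleb_lt a b : ~~ Rleb a b -> Rlt b a.
Proof. move/RlebP => H; lra. Qed.

Lemma Rleb_le a b : Rle a b -> Rleb a b.
Proof. by move/RlebP. Qed.

Section Rep.
Variables (T : finType) (e : rel T) (W : {set T}) (z : T) (l r : T -> R).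
Hypothesis Hsym : symmetric e.
Hypothesis eirr : irreflexive e.
Hypothesis Hrep : is_rep e W l r.
Hypothesis zW : z \in W.

Definition lbad u := ~~ Rleb (l z) (l u).
Definition rbad u := ~~ Rleb (r u) (r z).

Lemma rep_le u : u \in W -> Rle (l u) (r u).
Proof. by case: Hrep => H _; apply: H. Qed.

Lemma rep_adj x y : x \in W -> y \in W -> x != y ->
  reflect (Rle (l x) (r y) /\ Rle (l y) (r x)) (e x y).
Proof.
move=> xW yW nxy; case: Hrep => _ H; have := H x y xW yW nxy.
by case=> H1 H2; apply: (iffP idP).
Qed.

Lemma side_left (D : {set T}) u y : D \subset W -> z \notin D ->
  (forall a b, a \in D -> b \in D -> connect (induced e D) a b) ->
  u \in D -> lbad u -> y \in D -> e z y ->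
  exists2 c, c \in D & Rle (l c) (l z) /\ Rle (l z) (r c).
Proof.
move=> DW zD Dc uD lu yD ezy.
case: (pickP (fun c => (c \in D) && Rleb (l c) (l z) && Rleb (l z) (r c))).
  by move=> c /andP[/andP[cD /RlebP h1] /RlebP h2]; exists c.
move=> none; exfalso.
have Pu : (u \in D) && ~~ Rleb (l z) (r u).
  have hu : Rle (l u) (l z) by have := Rleb_lt lu; lra.
  by have := none u; rewrite uD (Rleb_le hu) /= => ->.
suff : (y \in D) && ~~ Rleb (l z) (r y).
  case/andP => _ /Rleb_lt Hy.
  have yW : y \in W by apply: (subsetP DW).
  have zy : z != y by apply: contraNneq zD => ->.
  by case/(rep_adj zW yW zy): ezy => H1 H2; lra.
apply: (connect_prop (P := fun w => (w \in D) && ~~ Rleb (l z) (r w))) (Dc u y uD yD) Pu.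
move=> a b /andP[aD /Rleb_lt ha] /and3P[_ bD eab].
have aW : a \in W by apply: (subsetP DW).
have bW : b \in W by apply: (subsetP DW).
have ab : a != b by apply: contraTneq eab => ->; rewrite eirr.
case/(rep_adj aW bW ab): eab => H1 H2.
have := none b; rewrite bD Rleb_le /=; last by lra.
by move=> ->.
Qed.

Lemma side_right (D : {set T}) u y : D \subset W -> z \notin D ->
  (forall a b, a \in D -> b \in D -> connect (induced e D) a b) ->
  u \in D -> rbad u -> y \in D -> e z y ->
  exists2 c, c \in D & Rle (l c) (r z) /\ Rle (r z) (r c).
Proof.
move=> DW zD Dc uD ru yD ezy.
case: (pickP (fun c => (c \in D) && Rleb (l c) (r z) && Rleb (r z) (r c))).
  by move=> c /andP[/andP[cD /RlebP h1] /RlebP h2]; exists c.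
move=> none; exfalso.
have Pu : (u \in D) && ~~ Rleb (l u) (r z).
  have hu : Rle (r z) (r u) by have := Rleb_lt ru; lra.
  have := none u; rewrite uD (Rleb_le hu) /= andbT.
  by case: (Rleb (l u) (r z)).
suff : (y \in D) && ~~ Rleb (l y) (r z).
  case/andP => _ /Rleb_lt Hy.
  have yW : y \in W by apply: (subsetP DW).
  have zy : z != y by apply: contraNneq zD => ->.
  by case/(rep_adj zW yW zy): ezy => H1 H2; lra.
apply: (connect_prop (P := fun w => (w \in D) && ~~ Rleb (l w) (r z))) (Dc u y uD yD) Pu.
move=> a b /andP[aD /Rleb_lt ha] /and3P[_ bD eab].
have aW : a \in W by apply: (subsetP DW).
have bW : b \in W by apply: (subsetP DW).
have ab : a != b by apply: contraTneq eab => ->; rewrite eirr.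
case/(rep_adj aW bW ab): eab => H1 H2.
have := none b; rewrite bD andbC Rleb_le /=; last by lra.
by move=> ->.
Qed.

Lemma conflict (D1 D2 : {set T}) u1 u2 y1 y2 :
  D1 \subset W -> z \notin D1 -> D2 \subset W -> z \notin D2 ->
  (forall a b, a \in D1 -> b \in D1 -> connect (induced e D1) a b) ->
  (forall a b, a \in D2 -> b \in D2 -> connect (induced e D2) a b) ->
  y1 \in D1 -> e z y1 -> y2 \in D2 -> e z y2 ->
  (forall a b, a \in D1 -> b \in D2 -> (a != b) && ~~ e a b) ->
  u1 \in D1 -> u2 \in D2 ->
  (lbad u1 && lbad u2) || (rbad u1 && rbad u2) -> False.
Proof.
move=> D1W zD1 D2W zD2 C1 C2 y1D ez1 y2D ez2 sep u1D u2D /orP[] /andP[b1 b2].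
  have [c1 c1D [h1 h1']] := side_left D1W zD1 C1 u1D b1 y1D ez1.
  have [c2 c2D [h2 h2']] := side_left D2W zD2 C2 u2D b2 y2D ez2.
  have /andP[nc /negP ne] := sep _ _ c1D c2D; apply: ne.
  apply/(rep_adj (subsetP D1W _ c1D) (subsetP D2W _ c2D) nc); lra.
have [c1 c1D [h1 h1']] := side_right D1W zD1 C1 u1D b1 y1D ez1.
have [c2 c2D [h2 h2']] := side_right D2W zD2 C2 u2D b2 y2D ez2.
have /andP[nc /negP ne] := sep _ _ c1D c2D; apply: ne.
apply/(rep_adj (subsetP D1W _ c1D) (subsetP D2W _ c2D) nc); lra.
Qed.

Lemma extra_good (D : {set T}) x y : D \subset W -> z \notin D ->
  x \in D -> y \in D -> x != y -> ~~ e x y -> e z x -> e z y ->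
  (forall u, u \in D -> ~~ rbad u) \/ (forall u, u \in D -> ~~ lbad u) ->
  exists2 w, w \in D & ~~ lbad w && ~~ rbad w.
Proof.
move=> DW zD xD yD nxy nexy ezx ezy side.
have xW := subsetP DW _ xD; have yW := subsetP DW _ yD.
have zx : z != x by apply: contraNneq zD => ->.
have zy : z != y by apply: contraNneq zD => ->.
case/(rep_adj zW xW zx): ezx => hx1 hx2.
case/(rep_adj zW yW zy): ezy => hy1 hy2.
have hxx := rep_le xW; have hyy := rep_le yW.
have nadj : ~ (Rle (l x) (r y) /\ Rle (l y) (r x)).
  by move/(rep_adj xW yW nxy) => exy; rewrite exy in nexy.
rewrite /lbad /rbad.
case: side => H.
  have := H x xD; have := H y yD; rewrite /rbad !negbK => /RlebP ry /RlebP rx.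
  case: (Rlt_le_dec (r x) (l y)) => c.
    by exists y => //; rewrite !negbK !Rleb_le //; lra.
  exists x => //; rewrite !negbK !Rleb_le //.
  case: (Rlt_le_dec (r y) (l x)) => c2; first lra.
  by exfalso; apply: nadj; split.
have := H x xD; have := H y yD; rewrite /lbad !negbK => /RlebP ly /RlebP lx.
case: (Rlt_le_dec (r x) (l y)) => c.
  by exists x => //; rewrite !negbK !Rleb_le //; lra.
exists y => //; rewrite !negbK !Rleb_le //.
case: (Rlt_le_dec (r y) (l x)) => c2; first lra.
by exfalso; apply: nadj; split.
Qed.

Lemma exterior_bad w : w \in W -> w != z -> ~~ e z w -> lbad w || rbad w.
Proof.
move=> wW wz nezw; apply/negPn/negP; rewrite negb_or /lbad /rbad !negbK.
case/andP => /RlebP h1 /RlebP h2; move/negP: nezw; apply.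
have zw : z != w by rewrite eq_sym.
apply/(rep_adj zW wW zw); have := rep_le wW; lra.
Qed.

Definition Nset := [set w in W :\ z | lbad w || rbad w].

Lemma cardKN : imp_at W l r z + #|Nset| = #|W :\ z|.
Proof.
rewrite /imp_at -(cardsID Nset (W :\ z)) addnC; congr (_ + _).
  apply: eq_card => w; rewrite !inE; by case: (w == z); case: (w \in W); case: (lbad w || rbad w).
apply: eq_card => w; rewrite !inE /subint /lbad /rbad.
by case: (w == z); case: (w \in W); case: Rleb; case: Rleb.
Qed.

End Rep.


Lemma sum_take_sort_set (I : finType) (f : I -> nat) (X F : {set I}) m :
  F \subset X -> m <= #|F| ->
  sumn (take m (sort leq [seq f C | C <- enum X])) <= \sum_(C in F) f C.
Proof.
move=> FX Hm.
have P : perm_eq [seq f C | C <- enum X]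
                 ([seq f C | C <- enum F] ++ [seq f C | C <- enum (X :\: F)]).
  rewrite -map_cat; apply: perm_map; apply: uniq_perm.
  - exact: enum_uniq.
  - rewrite cat_uniq !enum_uniq andbT /=; apply/hasPn => x.
    by rewrite !mem_enum !inE => /andP[/negP H _]; apply/negP.
  - move=> x; rewrite mem_cat !mem_enum !inE.
    by case: (boolP (x \in F)) => [/(subsetP FX) -> //|_] /=.
have -> : sort leq [seq f C | C <- enum X] =
          sort leq ([seq f C | C <- enum F] ++ [seq f C | C <- enum (X :\: F)]).
  exact/(perm_sortP leq_total leq_trans anti_leq).
apply: leq_trans (sum_take_sort_cat _ _) _; first by rewrite size_map -cardE.
by rewrite sumnE big_map big_enum.
Qed.

Section Eng.
Variables (T : finType) (e : rel T).
Hypothesis Hsym : symmetric e.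
Hypothesis eirr : irreflexive e.

Local Notation V := [set: T].

Lemma card_setU_le (A B : {set T}) : #|A :|: B| <= #|A| + #|B|.
Proof. by rewrite cardsU leq_subr. Qed.

Lemma wt_bound z (A B : {set T}) :
  A \in local_comps e V z -> B \in local_comps e V z -> A != B ->
  (forall C, C \in local_comps e V z -> C != A -> C != B -> ~~ exterior e z C) ->
  wt e V z + #|A| + #|B| <= #|V :\ z|.
Proof.
move=> Ac Bc AB Hne.
set cs := local_comps e V z.
set F := cs :\ A :\ B.
have FX : F \subset [set C in cs | ~~ exterior e z C].
  apply/subsetP => C; rewrite !inE => /and3P[CB CA Cc]; by rewrite Cc Hne.
have cF : #|F| = #|cs| - 2.
  rewrite /F; have := cardsD1 A cs; rewrite Ac => ->.
  have := cardsD1 B (cs :\ A); rewrite !inE eq_sym AB Bc /= => ->.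
  by rewrite add1n addSn subn2.
have H1 : wt e V z <= \sum_(C in F) #|C|.
  rewrite /wt; apply: sum_take_sort_set => //; by rewrite cF.
have H2 : \sum_(C in cs) #|C| = #|A| + (#|B| + \sum_(C in F) #|C|).
  rewrite (big_setD1 A Ac) (big_setD1 B) //.
  by rewrite !inE eq_sym AB.
rewrite (card_comps Hsym) H2; lia.
Qed.

Lemma imp_eq_uniq (W : {set T}) k1 k2 : imp_eq e W k1 -> imp_eq e W k2 -> k1 = k2.
Proof.
case=> [[l1 [r1 [R1 E1]]] H1] [[l2 [r2 [R2 E2]]] H2].
apply/eqP; rewrite eqn_leq; apply/andP; split.
  by rewrite -E2; apply: H1.
by rewrite -E1; apply: H2.
Qed.

End Eng.


Section Eng2.
Variables (T : finType) (e : rel T).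
Hypothesis Hsym : symmetric e.
Hypothesis eirr : irreflexive e.
Local Notation V := [set: T].

Lemma nonclique (C : {set T}) : ~~ is_clique e C ->
  exists x y, [/\ x \in C, y \in C, x != y & ~~ e x y].
Proof.
case/forallPn => x; rewrite negb_imply => /andP[xC /forallPn[y]].
rewrite negb_imply => /andP[yC]; rewrite negb_imply => /andP[nxy nexy].
by exists x, y.
Qed.

Lemma ne_all z (C : {set T}) : ~~ exterior e z C -> forall u, u \in C -> e z u.
Proof.
move=> H u uC; apply/negPn/negP => nu; move/negP: H; apply.
by apply/existsP; exists u; rewrite uC.
Qed.

Variables (z : T) (p : nat).
Hypothesis Gc : connected_set e V.
Hypothesis Hcrit : p_critical e V p.
Hypothesis Hp : p = wt e V z.
Variables (Y : {set T}) (v y0 : T).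
Local Notation comps := (local_comps e V z).
Hypothesis Yc : Y \in comps.
Hypothesis vY : v \in Y.
Hypothesis Yconn : forall a b, a \in Y :\ v -> b \in Y :\ v -> connect (induced e (Y :\ v)) a b.
Hypothesis y0Y : y0 \in Y :\ v.
Hypothesis ezy0 : e z y0.

Definition famP (D : {set T}) := (D == Y :\ v) || ((D \in comps) && (D != Y)).

Lemma YsubVz : Y \subset V :\ z.
Proof. exact: comps_sub Yc. Qed.

Lemma fam_sub D : famP D -> D \subset (V :\ v) :\ z.
Proof.
case/orP => [/eqP ->|/andP[Dc DY]]; apply/subsetP => u.
  rewrite !inE => /andP[uv uY]; rewrite uv andbT.
  by move/subsetP: YsubVz => /(_ u uY); rewrite !inE andbT.
move=> uD; have /andP[uv _] := comps_sep Hsym Dc Yc DY uD vY.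
have := subsetP (comps_sub Dc) u uD; rewrite !inE uv !andbT => -> //.
Qed.

Lemma fam_conn D : famP D -> forall a b, a \in D -> b \in D -> connect (induced e D) a b.
Proof.
case/orP => [/eqP ->|/andP[Dc DY]]; first exact: Yconn.
exact (comps_conn Hsym Dc).
Qed.

Lemma fam_nbr D : famP D -> exists2 y, y \in D & e z y.
Proof.
case/orP => [/eqP ->|/andP[Dc DY]]; first by exists y0.
exact (comps_nbr Hsym Gc Dc).
Qed.

Lemma fam_sep D1 D2 : famP D1 -> famP D2 -> D1 != D2 ->
  forall a b, a \in D1 -> b \in D2 -> (a != b) && ~~ e a b.
Proof.
case/orP => [/eqP ->|/andP[D1c D1Y]]; case/orP => [/eqP ->|/andP[D2c D2Y]].
- by rewrite eqxx.
- move=> _ a b; rewrite inE => /andP[_ aY] bD; apply: (comps_sep Hsym Yc D2c) => //.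
  by rewrite eq_sym.
- move=> _ a b aD; rewrite inE => /andP[_ bY]; exact: (comps_sep Hsym D1c Yc).
- by move=> ne a b; exact (comps_sep Hsym D1c D2c ne).
Qed.

Definition famOf u := if u \in Y then Y :\ v else Defs.comp e (V :\ z) u.

Lemma famOf_fam u : u \in (V :\ v) :\ z -> famP (famOf u) && (u \in famOf u).
Proof.
move=> uW; rewrite /famOf; case: ifP => uY.
  by rewrite /famP eqxx /= !inE uY andbT; move: uW; rewrite !inE => /andP[_ /andP[]].
have uS : u \in V :\ z by move: uW; rewrite !inE => /andP[-> _].
rewrite comp_self andbT /famP (comps_of e uS) /=; apply/orP; right.
by apply: contraFneq uY => <-; rewrite comp_self.
Qed.

Definition extra (N D : {set T}) := D \in comps -> ~~ exterior e z D ->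
  ~~ is_clique e D -> #|N :&: D| < #|D|.

Lemma engine :
 (forall (N : {set T}) D1 D2, famP D1 -> famP D2 ->
   #|N| <= #|N :&: D1| + #|N :&: D2| -> (D1 = D2 -> #|N| <= #|N :&: D1|) ->
   (forall D, famP D -> exterior e z D -> D = D1 \/ D = D2) ->
   (D1 != D2 -> extra N D1 /\ extra N D2) ->
   exists A B, [/\ A \in comps, B \in comps, A != B,
     (forall C, C \in comps -> C != A -> C != B -> ~~ exterior e z C) &
     #|N| < #|A| + #|B|]) -> False.
Proof.
move=> Hsel; set W := V :\ v.
have vz : v != z by move/subsetP: YsubVz => /(_ v vY); rewrite !inE andbT.
have zW : z \in W by rewrite !inE eq_sym vz.
have WP : W \proper V by rewrite properT; apply/eqP => /setP /(_ v); rewrite !inE eqxx.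
case: Hcrit => p0 [_ Hsub].
have [k [kp [[l [r [Hrep Ek]]] _]]] := Hsub W WP.
set N := Nset W z l r.
have Hconf : forall D1 D2 u1 u2, famP D1 -> famP D2 -> D1 != D2 -> u1 \in D1 -> u2 \in D2 ->
    (lbad z l u1 && lbad z l u2) || (rbad z r u1 && rbad z r u2) -> False.
  move=> D1 D2 u1 u2 F1 F2 ne u1D u2D.
  have S1 := fam_sub F1; have S2 := fam_sub F2.
  have D1W : D1 \subset W by apply: subset_trans S1 (subsetDl _ _).
  have D2W : D2 \subset W by apply: subset_trans S2 (subsetDl _ _).
  have zD1 : z \notin D1 by apply/negP => /(subsetP S1); rewrite !inE eqxx.
  have zD2 : z \notin D2 by apply/negP => /(subsetP S2); rewrite !inE eqxx.
  have [y1 y1D ez1] := fam_nbr F1; have [y2 y2D ez2] := fam_nbr F2.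
  exact: (conflict eirr Hrep zW D1W zD1 D2W zD2 (fam_conn F1) (fam_conn F2)
           y1D ez1 y2D ez2 (fam_sep F1 F2 ne) u1D u2D).
have pickD : forall b : T -> bool,
    (forall u1 u2, famOf u1 != famOf u2 -> u1 \in W :\ z -> u2 \in W :\ z ->
        b u1 -> b u2 -> False) ->
    exists2 D, famP D & forall u, u \in W :\ z -> b u -> u \in D.
  move=> b Hb; case: (pickP (fun u => (u \in W :\ z) && b u)).
    move=> u1 /andP[u1W bu1]; have /andP[F1 _] := famOf_fam u1W.
    exists (famOf u1) => // u uW bu; have /andP[_ uF] := famOf_fam uW.
    case: (eqVneq (famOf u1) (famOf u)) => [->//|ne].
    by exfalso; exact: (Hb _ _ ne u1W uW bu1 bu).
  move=> none; exists (Y :\ v); first by rewrite /famP eqxx.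
  by move=> u uW bu; have := none u; rewrite uW bu.
have [D1 F1 HL] : exists2 D, famP D & forall u, u \in W :\ z -> lbad z l u -> u \in D.
  apply: pickD => u1 u2 ne u1W u2W b1 b2.
  have /andP[G1 m1] := famOf_fam u1W; have /andP[G2 m2] := famOf_fam u2W.
  by apply: (Hconf _ _ _ _ G1 G2 ne m1 m2); rewrite b1 b2.
have [D2 F2 HR] : exists2 D, famP D & forall u, u \in W :\ z -> rbad z r u -> u \in D.
  apply: pickD => u1 u2 ne u1W u2W b1 b2.
  have /andP[G1 m1] := famOf_fam u1W; have /andP[G2 m2] := famOf_fam u2W.
  by apply: (Hconf _ _ _ _ G1 G2 ne m1 m2); rewrite b1 b2 orbT.
have NU : N \subset D1 :|: D2.
  apply/subsetP => u; rewrite !inE => /andP[uW /orP[lb|rb]].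
    by rewrite (HL u _ lb) // !inE.
  by rewrite (HR u _ rb) ?orbT // !inE.
have NWz : N \subset W :\ z by apply/subsetP => u; rewrite inE => /andP[].
have [A [B [Ac Bc AB Hne Hlt]]] : exists A B, [/\ A \in comps, B \in comps, A != B,
     (forall C, C \in comps -> C != A -> C != B -> ~~ exterior e z C) &
     #|N| < #|A| + #|B|].
  apply: (Hsel N D1 D2 F1 F2).
  - apply: leq_trans (card_setU_le _ _).
    by apply: subset_leq_card; rewrite -setIUr subsetIidl.
  - by move=> E; apply: subset_leq_card; rewrite subsetIidl -(setUid D1) {2}E.
  - move=> D FD /existsP[w /andP[wD nw]].
    have wW : w \in W :\ z by apply: (subsetP (fam_sub FD)).
    have wW' : w \in W by move: wW; rewrite in_setD1 => /andP[_ ->].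
    have wz : w != z by move: wW; rewrite in_setD1 => /andP[-> _].
    have : lbad z l w || rbad z r w := exterior_bad Hrep zW wW' wz nw.
    case/orP => [/(HL w wW) wD1|/(HR w wW) wD2].
      case: (eqVneq D D1) => [->|ne]; [by left|].
      by have := fam_sep FD F1 ne wD wD1; rewrite eqxx.
    case: (eqVneq D D2) => [->|ne]; [by right|].
    by have := fam_sep FD F2 ne wD wD2; rewrite eqxx.
  - move=> ne.
    have noR : forall u, u \in D1 -> ~~ rbad z r u.
      move=> u uD; apply/negP => rb.
      have uW : u \in W :\ z by apply: (subsetP (fam_sub F1)).
      by have := fam_sep F1 F2 ne uD (HR u uW rb); rewrite eqxx.
    have noL : forall u, u \in D2 -> ~~ lbad z l u.
      move=> u uD; apply/negP => lb.
      have uW : u \in W :\ z by apply: (subsetP (fam_sub F2)).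
      by have := fam_sep F1 F2 ne (HL u uW lb) uD; rewrite eqxx.
    have gen : forall D, famP D -> ((forall u, u \in D -> ~~ rbad z r u) \/
                                   (forall u, u \in D -> ~~ lbad z l u)) -> extra N D.
      move=> D FD side Dc Dne Dncl.
      have [x [y [xD yD nxy nexy]]] := nonclique Dncl.
      have S := fam_sub FD.
      have DW : D \subset W by apply: subset_trans S (subsetDl _ _).
      have zD : z \notin D by apply/negP => /(subsetP S); rewrite !inE eqxx.
      have [w wD /andP[gl gr]] := extra_good Hrep zW DW zD xD yD nxy nexy
                                  (ne_all Dne xD) (ne_all Dne yD) side.
      apply: proper_card; apply/properP; split; first exact: subsetIr.
      exists w => //; rewrite !inE negb_and; apply/orP; left.
      by rewrite negb_and; apply/orP; right; rewrite negb_or gl gr.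
    by split; apply: gen => //; [left|right].
have Hwt := wt_bound Hsym Ac Bc AB Hne.
have HK := cardKN W z l r.
have HWz : #|W :\ z| + 1 = #|V :\ z|.
  rewrite (cardsD1 v (V :\ z)) !inE vz /= addnC add1n; congr (_.+1).
  by apply: eq_card => u; rewrite /W !inE; case: (u == z); case: (u == v).
have Himp : imp_at W l r z <= k by rewrite -Ek; exact: (leq_bigmax_cond _ zW).
rewrite -/N in HK.
move: Hlt Hwt HWz Himp HK kp Hp.
generalize #|N| #|A| #|B| (wt e V z) #|V :\ z| #|W :\ z| (imp_at W l r z) k p.
clear => a b c d f g h i j; lia.
Qed.

End Eng2.


Lemma card2_le (I : finType) (A : {set I}) a b : a \in A -> b \in A -> a != b -> 2 <= #|A|.
Proof.
move=> aA bA ab; rewrite (cardsD1 a A) aA add1n ltnS (cardsD1 b) !inE eq_sym ab bA.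
by [].
Qed.

Lemma card3_le (I : finType) (A : {set I}) a b c : a \in A -> b \in A -> c \in A ->
  a != b -> a != c -> b != c -> 3 <= #|A|.
Proof.
move=> aA bA cA ab ac bc; rewrite (cardsD1 a A) aA add1n ltnS.
by apply: (card2_le (a := b) (b := c)); rewrite // !inE ?bA ?cA eq_sym ?ab ?ac.
Qed.

Ltac clean := repeat match goal with
 | H : is_true (famP _ _ _ _ _) |- _ => clear H
 | H : forall _, _ |- _ => clear H
 | H : is_true (_ \in _) |- _ => clear H
 | H : is_true (_ != _) |- _ => clear H
 | H : is_true (is_clique _ _) |- _ => clear H
 | H : is_true (~~ _) |- _ => clear H
 | H : _ = _ :> {set _} |- _ => clear H
 | H : connected_set _ _ |- _ => clear H
 | H : p_critical _ _ _ |- _ => clear H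
 | H : _ = wt _ _ _ |- _ => clear H
 end.
Ltac mylia := clean; lia.

Section Main.
Variables (T : finType) (e : rel T) (z : T) (p : nat).
Hypothesis Hsym : symmetric e.
Hypothesis eirr : irreflexive e.
Local Notation V := [set: T].
Local Notation comps := (local_comps e V z).
Local Notation M := (max_order_comps e V z).
Hypothesis Gc : connected_set e V.
Hypothesis Hcrit : p_critical e V p.
Hypothesis Hp : p = wt e V z.

Lemma p_pos : 0 < p.
Proof. by case: Hcrit. Qed.

Lemma n3 : 3 <= #|comps|.
Proof.
rewrite leqNgt; apply/negP => H; have := p_pos; rewrite Hp /wt /=.
have -> : #|comps| - 2 = 0 by lia.
by rewrite take0.
Qed.

Lemma other Y : exists2 C, C \in comps & C != Y.
Proof.
have : 0 < #|comps :\ Y|.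
  have := n3; rewrite (cardsD1 Y comps); case: (Y \in comps) => /=; lia.
by case/card_gt0P => C; rewrite !inE => /andP[CY Cc]; exists C.
Qed.

Lemma leM C : C \in comps -> #|C| <= M.
Proof. by move=> Cc; rewrite /max_order_comps; apply: (leq_bigmax_cond _ Cc). Qed.

Lemma exM : exists2 C, C \in comps & #|C| = M.
Proof.
have : 0 < #|comps| by have := n3; lia.
by move/(eq_bigmax_cond (fun C : {set T} => #|C|)) => [C Cc E]; exists C; rewrite // /max_order_comps E.
Qed.

Lemma mccP C : (C \in max_clique_comps e V z) = [&& C \in comps, is_clique e C & #|C| == M].
Proof. by rewrite inE. Qed.

Lemma comp_pos C : C \in comps -> 0 < #|C|.
Proof. by case/imsetP => x _ ->; apply/card_gt0P; exists x; rewrite comp_self. Qed.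

Lemma remove_engine Y y0 : Y \in comps -> y0 \in Y -> e z y0 -> 1 < #|Y| ->
  (forall v, v \in Y -> v != y0 -> forall (N D1 D2 : {set T}),
   famP e z Y v D1 -> famP e z Y v D2 ->
   #|N| <= #|N :&: D1| + #|N :&: D2| -> (D1 = D2 -> #|N| <= #|N :&: D1|) ->
   (forall D, famP e z Y v D -> exterior e z D -> D = D1 \/ D = D2) ->
   (D1 != D2 -> extra e z N D1 /\ extra e z N D2) ->
   exists A B, [/\ A \in comps, B \in comps, A != B,
     (forall C, C \in comps -> C != A -> C != B -> ~~ exterior e z C) &
     #|N| < #|A| + #|B|]) -> False.
Proof.
move=> Yc y0Y ez Y2 Sel.
have [v vY Yconn] := noncut Hsym (comps_conn Hsym Yc) y0Y Y2.
have vY' : v \in Y by move: vY; rewrite in_setD1 => /andP[_ ->].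
have vy0 : v != y0 by move: vY; rewrite in_setD1 => /andP[-> _].
have y0Y' : y0 \in Y :\ v by rewrite !inE eq_sym vy0 y0Y.
exact: (engine Hsym eirr Gc Hcrit Hp Yc vY' Yconn y0Y' ez (Sel v vY' vy0)).
Qed.

Lemma partb : #|exterior_comps e V z| = 0 -> 3 <= #|max_clique_comps e V z|.
Proof.
move=> E0.
have Hne0 : forall C, C \in comps -> ~~ exterior e z C.
  move=> C Cc; apply/negP => ext; move/eqP: E0; rewrite cards_eq0 => /eqP/setP/(_ C).
  by rewrite !inE Cc ext.
rewrite leqNgt; apply/negP => q2.
have [Y0 Y0c Y0M] := exM.
case: (leqP M 1) => M1.
  (* all comps are singletons, hence max cliques *)
  suff E : max_clique_comps e V z = comps by move: q2; rewrite E ltnNge n3.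
  apply/setP => C; rewrite mccP; case Cc: (C \in comps) => //=.
  have h1 := leM Cc; have h0 := comp_pos Cc.
  by rewrite clique1 //= ?eqn_leq ?h1 //; lia.
have [Y [Yc YM Hpick]] : exists Y, [/\ Y \in comps, #|Y| = M &
    forall C1 C2, C1 \in max_clique_comps e V z -> C2 \in max_clique_comps e V z ->
      C1 != C2 -> C1 != Y -> C2 != Y -> False].
  case: (pickP (fun C => C \in max_clique_comps e V z)) => [Y YM|none].
    move: (YM); rewrite mccP => /and3P[Yc _ /eqP YMM].
    exists Y; split => // C1 C2 m1 m2 ne12 n1 n2.
    by move: q2; rewrite ltnNge (card3_le m1 m2 YM).
  exists Y0; split => // C1 C2 m1; by rewrite none in m1.
have [y0 y0Y ez] := comps_nbr Hsym Gc Yc.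
apply: (remove_engine Yc y0Y ez); first by mylia.
move=> v vY _ N D1 D2 F1 F2 Hs Heq _ Hx.
have fin : forall A B, A \in comps -> B \in comps -> A != B -> #|N| < #|A| + #|B| ->
  exists A B, [/\ A \in comps, B \in comps, A != B,
     (forall C, C \in comps -> C != A -> C != B -> ~~ exterior e z C) &
     #|N| < #|A| + #|B|].
  by move=> A B Ac Bc AB lt; exists A, B; split => // C Cc _ _; exact: Hne0.
have cY' : #|Y :\ v| = M - 1 by move: (cardsD1 v Y); rewrite vY YM; mylia.
have NI : forall D, #|N :&: D| <= #|D| by move=> D; apply: subset_leq_card; apply: subsetIr.
case: (eqVneq D1 D2) => [E|ne].
  have HN := Heq E; have := NI D1.
  case/orP: F1 => [/eqP ED|/andP[D1c D1Y]].
    have [C Cc CY] := other Y; move=> h; apply: (fin Y C) => //; first by rewrite eq_sym.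
    have := comp_pos Cc; rewrite ED in HN h; rewrite cY' in h; mylia.
  move=> h; apply: (fin D1 Y) => //.
  have := comp_pos Yc; mylia.
have [X1 X2] := Hx ne.
have h1 := NI D1; have h2 := NI D2.
case/orP: F1 => [/eqP ED1|/andP[D1c D1Y]].
  case/orP: F2 => [/eqP ED2|/andP[D2c D2Y]]; first by rewrite ED1 ED2 eqxx in ne.
  apply: (fin Y D2) => //; first by rewrite eq_sym.
  rewrite ED1 in Hs h1; rewrite cY' in h1; mylia.
case/orP: F2 => [/eqP ED2|/andP[D2c D2Y]].
  apply: (fin D1 Y) => //.
  rewrite ED2 in Hs h2; rewrite cY' in h2; mylia.
have l1 := leM D1c; have l2 := leM D2c.
case: (ltnP #|D1| M) => c1.
  apply: (fin Y D2) => //; first by rewrite eq_sym.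
  mylia.
case: (ltnP #|D2| M) => c2.
  apply: (fin D1 Y) => //; mylia.
have e1 : #|D1| = M by mylia.
have e2 : #|D2| = M by mylia.
case: (boolP (is_clique e D1)) => k1.
  case: (boolP (is_clique e D2)) => k2.
    exfalso; apply: (Hpick D1 D2) => //; by rewrite mccP ?D1c ?D2c ?k1 ?k2 ?e1 ?e2 eqxx.
  have h : #|N :&: D2| < #|D2| by apply: X2 => //; exact: Hne0.
  apply: (fin D1 D2) => //; mylia.
have h : #|N :&: D1| < #|D1| by apply: X1 => //; exact: Hne0.
apply: (fin D1 D2) => //; mylia.
Qed.


Lemma two_set (X : {set T}) y w : #|X| = 2 -> y \in X -> w \in X -> y != w ->
  forall a, a \in X -> (a == y) || (a == w).
Proof.
move=> X2 yX wX yw a aX.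
have EX : X = [set y; w].
  apply/eqP; rewrite eq_sym eqEcard cards2 yw X2 leqnn andbT.
  by apply/subsetP => b; rewrite !inE => /orP[] /eqP ->.
by move: aX; rewrite EX !inE.
Qed.

Lemma parta : #|exterior_comps e V z| = 1 -> 2 <= #|max_clique_comps e V z|.
Proof.
move=> /eqP/cards1P [X EX].
have XE : X \in exterior_comps e V z by rewrite EX inE.
move: (XE); rewrite inE => /andP[Xc Xext].
have Hne : forall C, C \in comps -> C != X -> ~~ exterior e z C.
  move=> C Cc CX; apply/negP => ext.
  have : C \in exterior_comps e V z by rewrite inE Cc ext.
  by rewrite EX inE (negbTE CX).
rewrite leqNgt; apply/negP => q1.
have [w wX nw] : exists2 w, w \in X & ~~ e z w.
  by case/existsP: Xext => w /andP[]; exists w.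
have [y yX ezy] := comps_nbr Hsym Gc Xc.
have yw : y != w by apply: contraNneq nw => <-.
have X2 : 1 < #|X| by apply: (card2_le yX wX yw).
have fin : forall (N B : {set T}), B \in comps -> B != X -> #|N| < #|X| + #|B| ->
  exists A B, [/\ A \in comps, B \in comps, A != B,
     (forall C, C \in comps -> C != A -> C != B -> ~~ exterior e z C) &
     #|N| < #|A| + #|B|].
  move=> N B Bc BX lt; exists X, B; split => //; first by rewrite eq_sym.
  by move=> C Cc CX _; exact: Hne.
have NI : forall (N D : {set T}), #|N :&: D| <= #|D|.
  by move=> N D; apply: subset_leq_card; apply: subsetIr.
have XconnAll := comps_conn Hsym Xc.
case: (leqP 3 #|X|) => X3.
  have [v [vX Xv [y1 y1X ey1] ext']] : exists v, [/\ v \in X,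
      (forall a b, a \in X :\ v -> b \in X :\ v -> connect (induced e (X :\ v)) a b),
      exists2 y1, y1 \in X :\ v & e z y1 & exterior e z (X :\ v)].
    have [v1 v1X C1] := noncut Hsym XconnAll yX X2.
    have v1X' : v1 \in X by move: v1X; rewrite in_setD1 => /andP[_ ->].
    have v1y : v1 != y by move: v1X; rewrite in_setD1 => /andP[-> _].
    case: (boolP (e z v1 || [exists w' in X :\ v1, ~~ e z w'])) => H.
      exists v1; split => //.
        by exists y => //; rewrite !inE eq_sym v1y yX.
      case/orP: H => [ev1|//]; apply/existsP; exists w.
      rewrite !inE wX nw andbT andbT; by apply: contraNneq nw => ->.
    move: H; rewrite negb_or => /andP[nv1 /existsPn allnbr].
    have all' : forall a, a \in X :\ v1 -> e z a.
      by move=> a aX; have := allnbr a; rewrite aX /= negbK.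
    have [v2 v2X C2] := noncut Hsym XconnAll v1X' X2.
    have v2X' : v2 \in X by move: v2X; rewrite in_setD1 => /andP[_ ->].
    have v2v1 : v2 != v1 by move: v2X; rewrite in_setD1 => /andP[-> _].
    have : 0 < #|X :\ v1 :\ v2|.
      move: X3; rewrite (cardsD1 v1 X) v1X' (cardsD1 v2 (X :\ v1)) !inE v2v1 v2X'.
      by rewrite !add1n !ltnS.
    case/card_gt0P => x; rewrite !inE => /and3P[xv2 xv1 xX].
    exists v2; split => //.
      by exists x; [rewrite !inE xv2 xX | apply: all'; rewrite !inE xv1 xX].
    apply/existsP; exists v1; rewrite !inE eq_sym v2v1 v1X' /=.
    exact: nv1.
  apply: (engine Hsym eirr Gc Hcrit Hp Xc vX Xv y1X ey1).
  move=> N D1 D2 F1 F2 Hs Heq Hx _.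
  have cX' : #|X :\ v| = #|X| - 1 by move: (cardsD1 v X); rewrite vX; mylia.
  have fX' : famP e z X v (X :\ v) by rewrite /famP eqxx.
  have [B Bc BX] := other X.
  case: (eqVneq D1 D2) => [E|ne].
    have HN := Heq E; have h := NI N D1.
    case: (Hx _ fX' ext') => ED; [rewrite -ED in HN h|rewrite E -ED in HN h];
      rewrite cX' in h;
      apply: (fin N B) => //; have := comp_pos Bc; mylia.
  have side : forall Da Db, famP e z X v Db -> Da = X :\ v -> Db != Da ->
      #|N| <= #|N :&: Da| + #|N :&: Db| -> exists A B, [/\ A \in comps, B \in comps, A != B,
      (forall C, C \in comps -> C != A -> C != B -> ~~ exterior e z C) &
      #|N| < #|A| + #|B|].
    move=> Da Db Fb EDa nab Hs'.
    case/orP: Fb => [/eqP Eb|/andP[Dbc DbX]]; first by rewrite Eb EDa eqxx in nab.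
    apply: (fin N Db) => //.
    have ha := NI N Da; have hb := NI N Db; rewrite EDa in Hs' ha; rewrite cX' in ha.
    mylia.
  case: (Hx _ fX' ext') => ED.
    by apply: (side D1 D2) => //; rewrite eq_sym.
  by apply: (side D2 D1) => //; rewrite addnC.
have Xeq2 : #|X| = 2 by mylia.
have XM := leM Xc.
case: (boolP [forall C in comps :\ X, #|C| <= 1]) => [/forallP small|].
  have small' : forall C, C \in comps -> C != X -> #|C| <= 1.
    by move=> C Cc CX; have := small C; rewrite !inE CX Cc.
  have wy : w != y by rewrite eq_sym.
  have wX' : w \in X by [].
  have XwC : forall a b, a \in X :\ w -> b \in X :\ w -> connect (induced e (X :\ w)) a b.
    move=> a b; rewrite !in_setD1 => /andP[aw aX] /andP[bw bX].
    have := two_set Xeq2 yX wX yw aX; rewrite (negbTE aw) orbF => /eqP ->.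
    have := two_set Xeq2 yX wX yw bX; rewrite (negbTE bw) orbF => /eqP ->.
    exact: connect0.
  have yXw : y \in X :\ w by rewrite !inE yw yX.
  apply: (engine Hsym eirr Gc Hcrit Hp Xc wX' XwC yXw ezy).
  move=> N D1 D2 F1 F2 Hs _ _ _.
  have sz : forall D, famP e z X w D -> #|D| <= 1.
    move=> D; case/orP => [/eqP ->|/andP[Dc DX]]; last exact: small'.
    by move: (cardsD1 w X); rewrite wX Xeq2; mylia.
  have [B Bc BX] := other X.
  apply: (fin N B) => //; have := comp_pos Bc; have := sz _ F1; have := sz _ F2.
  have := NI N D1; have := NI N D2; mylia.
rewrite negb_forall_in => /existsP[C0 /andP[]]; rewrite !inE => /andP[C0X C0c].
rewrite -ltnNge => C02.
have C0M := leM C0c.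
case: (leqP M 2) => M2.
  have M2' : 2 <= M by rewrite -Xeq2.
  have XC : X \in max_clique_comps e V z.
    by rewrite mccP Xc (clique2 XconnAll Xeq2) Xeq2 eq_sym eqn_leq M2 M2'.
  have CC : C0 \in max_clique_comps e V z.
    have C0e : #|C0| = 2 by mylia.
    by rewrite mccP C0c (clique2 (comps_conn Hsym C0c) C0e) C0e eq_sym eqn_leq M2 M2'.
  by move: q1; rewrite ltnNge (card2_le XC CC) // eq_sym.
have [Y0 Y0c Y0M] := exM.
have [Y [Yc YM Hpick]] : exists Y, [/\ Y \in comps, #|Y| = M &
    forall C, C \in max_clique_comps e V z -> C != Y -> False].
  case: (pickP (fun C => C \in max_clique_comps e V z)) => [Y YM|none].
    move: (YM); rewrite mccP => /and3P[Yc _ /eqP YMM].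
    exists Y; split => // C m ne.
    by move: q1; rewrite ltnNge (card2_le m YM).
  exists Y0; split => // C m; by rewrite none in m.
have YX : Y != X by apply: contraTneq M2 => EY; rewrite -YM EY Xeq2.
have [y0 y0Y ez0] := comps_nbr Hsym Gc Yc.
apply: (remove_engine Yc y0Y ez0); first by mylia.
move=> v vY _ N D1 D2 F1 F2 Hs Heq Hx Hextra.
have cY' : #|Y :\ v| = M - 1 by move: (cardsD1 v Y); rewrite vY YM; mylia.
have fXf : famP e z Y v X by rewrite /famP; apply/orP; right; rewrite Xc eq_sym YX.
case: (eqVneq D1 D2) => [E|ne].
  have HN := Heq E; have h := NI N D1.
  case: (Hx _ fXf Xext) => ED; [rewrite -ED in HN h|rewrite E -ED in HN h];
    apply: (fin N Y) => //; have := comp_pos Yc; mylia.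
have side : forall Da Db, famP e z Y v Db -> Da = X -> Db != Da -> extra e z N Db ->
    #|N| <= #|N :&: Da| + #|N :&: Db| -> exists A B, [/\ A \in comps, B \in comps, A != B,
      (forall C, C \in comps -> C != A -> C != B -> ~~ exterior e z C) &
      #|N| < #|A| + #|B|].
  move=> Da Db Fb EDa nab Xb Hs'.
  have ha := NI N Da; rewrite EDa in Hs' ha.
  case/orP: Fb => [/eqP Eb|/andP[Dbc DbY]].
    rewrite Eb in Hs'; have hb := NI N (Y :\ v); rewrite cY' in hb.
    apply: (fin N Y) => //; mylia.
  have DbX : Db != X by rewrite -EDa.
  have lb := leM Dbc.
  case: (ltnP #|Db| M) => cb.
    apply: (fin N Y) => //; have hb := NI N Db; mylia.
  have eb : #|Db| = M by mylia.
  case: (boolP (is_clique e Db)) => kb.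
    exfalso; apply: (Hpick Db) => //; by rewrite mccP Dbc kb eb eqxx.
  have hb : #|N :&: Db| < #|Db| by apply: Xb => //; exact: Hne.
  apply: (fin N Db) => //; mylia.
have [Ex1 Ex2] := Hextra ne.
case: (Hx _ fXf Xext) => ED.
  by apply: (side D1 D2) => //; rewrite eq_sym.
by apply: (side D2 D1) => //; rewrite addnC.
Qed.
End Main.


Theorem theorem3p3 (T : finType) (e : rel T) (p : nat) (z : T) :
  simple_graph e ->
  connected_set e [set: T] ->
  interval_graph e [set: T] ->
  balanced e [set: T] ->
  p_critical e [set: T] p ->
  basepoint e [set: T] z ->
  (#|exterior_comps e [set: T] z| <= 1 -> 2 <= #|max_clique_comps e [set: T] z|) /\
  (#|exterior_comps e [set: T] z| = 0 -> 3 <= #|max_clique_comps e [set: T] z|).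
Proof.
move=> [Hsym eirr] Gc _ _ Hcrit [_ [_ Hwt]].
have Hp : p = wt e [set: T] z.
  by case: Hcrit => _ [Hi _]; exact: imp_eq_uniq Hi Hwt.
split.
  move=> E1; case: (eqVneq #|exterior_comps e [set: T] z| 0) => [E0|ne].
    by apply: leq_trans (partb Hsym eirr Gc Hcrit Hp E0).
  apply: (parta Hsym eirr Gc Hcrit Hp).
  by apply/eqP; rewrite eqn_leq E1 lt0n ne.
by move=> E0; exact: (partb Hsym eirr Gc Hcrit Hp E0).
Qed.
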